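(* Fix an integer $r\ge1$. For $\ell\ge2$ with $r<2^{\ell-1}$ (so that $r<q/2$ for $q=2^\ell$), the sets $S_t(\cdot)$ defined below satisfy $$|S_0(\ell)|=3|S_0(\ell-1)|+|S_1(\ell-1)|,\quad |S_1(\ell)|=|S_0(\ell-1)|+|S_1(\ell-1)|+|S_2(\ell-1)|,\quad |S_2(\ell)|=|S_2(\ell-1)|.$$
   Context: For $\ell\ge1$, $Q=2^\ell$ and an integer $t\ge0$, $S_t(\ell)$ is the set of pairs $(a,b)$ of integers with $0\le a,b\le Q-1$ for which there exist integers $i,j\ge0$ with $i\le_2 b$, $j\le_2 b-i$ and $2i+j+a=Q-r'+tQ$ for some $r'\in\{1,\dots,r\}$. Here $u\le_2 w$ means every binary digit of $u$ is at most the corresponding binary digit of $w$. *)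

(* Defs.v *)
From mathcomp Require Import all_boot.
From mathcomp Require Import boolp.
Set Implicit Arguments.
Unset Strict Implicit.
Unset Printing Implicit Defensive.

Definition bitn (k u : nat) : bool := odd (u %/ 2 ^ k).

Definition le2 (u w : nat) : Prop := forall k : nat, (bitn k u <= bitn k w)%N.

(* Membership of (a,b) in S_t(l) for the fixed parameter r (Q = 2^l).
   The condition 2i+j+a = Q - r' + tQ is written additively as
   2i+j+a+r' = Q + tQ to avoid truncated subtraction. *)
Definition inS (r t l a b : nat) : Prop :=
  exists i j : nat, le2 i b /\ le2 j (b - i) /\
    exists r' : nat, [/\ (1 <= r')%N, (r' <= r)%N &
      2 * i + j + a + r' = 2 ^ l + t * 2 ^ l].

Definition S (r t l : nat) : {set 'I_(2 ^ l) * 'I_(2 ^ l)} :=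
  [set p | `[< inS r t l (val p.1) (val p.2) >] ].

(* Main.v *)
Require Import Defs.
From mathcomp Require Import all_boot boolp zify.

Lemma bitn_small k u : u < 2 ^ k -> bitn k u = false.
Proof. by move=> h; rewrite /bitn divn_small. Qed.

Lemma bitn_split m k (q : bool) u : u < 2 ^ m ->
  bitn k (q * 2 ^ m + u) = ((k < m) && bitn k u) || ((k == m) && q).
Proof.
move=> hu; case: (ltngtP k m) => hk /=.
- rewrite /bitn.
  have -> : 2 ^ m = 2 ^ (m - k) * 2 ^ k by rewrite -expnD subnK // ltnW.
  rewrite mulnA divnMDl ?expn_gt0 // oddD oddM oddX /=.
  have -> : (m - k == 0) = false by apply/negbTE; rewrite subn_eq0 -ltnNge.
  by rewrite andbF orbF.
- rewrite bitn_small //.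
  apply: (@leq_trans (2 ^ m.+1)); last by rewrite leq_pexp2l.
  rewrite expnS; case: q => /=; lia.
- by rewrite hk /bitn divnMDl ?expn_gt0 // (divn_small hu) addn0 oddb.
Qed.

Lemma le2_split m (qu qw : bool) u w : u < 2 ^ m -> w < 2 ^ m ->
  le2 (qu * 2 ^ m + u) (qw * 2 ^ m + w) <-> (qu <= qw) /\ le2 u w.
Proof.
move=> hu hw; split.
- move=> h; split.
  + by have := h m; rewrite !bitn_split // ltnn eqxx.
  + move=> k; case: (ltnP k m) => hk.
    * by have := h k; rewrite !bitn_split // hk (ltn_eqF hk) !orbF.
    * rewrite bitn_small //; apply: leq_trans hu _; exact: leq_pexp2l.
- move=> [hq h] k; rewrite !bitn_split //.
  case: (ltngtP k m) => hk //=.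
  by rewrite !orbF; apply: h.
Qed.

Lemma decomp m u : u < 2 ^ m.+1 -> exists (q : bool) u', u' < 2 ^ m /\ u = q * 2 ^ m + u'.
Proof.
rewrite expnS => hu; case: (leqP (2 ^ m) u) => h.
- by exists true, (u - 2 ^ m); split; lia.
- by exists false, u; split; lia.
Qed.

Lemma le2_leqM M u w : u < 2 ^ M -> w < 2 ^ M -> le2 u w -> u <= w.
Proof.
elim: M u w => [|M IH] u w.
- by rewrite expn0; case: u.
- move=> /decomp [qu [u' [hu ->]]] /decomp [qw [w' [hw ->]]].
  move/(le2_split _ _ _ _ _ hu hw) => [hq /(IH _ _ hu hw) h].
  by case: qu qw hq => [] [] //=; lia.
Qed.

Lemma le2_leq u w : le2 u w -> u <= w.
Proof.
apply: (@le2_leqM (u + w)).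
- apply: leq_trans (ltn_expl u (ltnSn 1)) _; apply: leq_pexp2l => //; lia.
- apply: leq_trans (ltn_expl w (ltnSn 1)) _; apply: leq_pexp2l => //; lia.
Qed.
Arguments le2_leq {u w}.
Arguments decomp {m u}.

Definition P (b s : nat) := exists i j, le2 i b /\ le2 j (b - i) /\ s = 2 * i + j.

Lemma P_bound b s : P b s -> s <= 2 * b.
Proof.
move=> [i [j [/le2_leq h1 [/le2_leq h2 ->]]]]; lia.
Qed.

Arguments P_bound {b s}.

Lemma P0 b : P b 0.
Proof. exists 0, 0; split; [|split] => // k; by rewrite /bitn div0n. Qed.

Lemma bsub m (qb qi : bool) b i : qi <= qb -> i <= b ->
  (qb * 2 ^ m + b) - (qi * 2 ^ m + i) = (qb && ~~ qi) * 2 ^ m + (b - i).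
Proof. by case: qb; case: qi => //= _; lia. Qed.

Lemma P_split m (qb : bool) b s : b < 2 ^ m ->
  P (qb * 2 ^ m + b) s <-> exists c s', [/\ c <= 2 * qb, P b s' & s = c * 2 ^ m + s'].
Proof.
move=> hb; split.
- move=> [i [j [hi [hj ->]]]].
  have hi2 : i < 2 ^ m.+1.
    have := le2_leq hi; rewrite expnS; case: qb {hi hj} => /=; lia.
  case: (decomp hi2) => qi [i' [hi' Ei]]; subst i.
  move/(le2_split _ _ _ _ _ hi' hb): (hi) => [hq hle].
  move: hj; rewrite bsub //; last exact: le2_leq.
  move=> hj.
  have hbi : b - i' < 2 ^ m by lia.
  have hj2 : j < 2 ^ m.+1.
    have := le2_leq hj; rewrite expnS; case: (qb && ~~ qi) => /=; lia.
  case: (decomp hj2) => qj [j' [hj' Ej]]; subst j.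
  move/(le2_split _ _ _ _ _ hj' hbi): hj => [hq2 hle2].
  exists (2 * qi + qj), (2 * i' + j'); split.
  + by move: hq hq2; clear; case: qb; case: qi; case: qj.
  + by exists i', j'.
  + rewrite !mulnDl !mulnDr !mulnA; lia.
- move=> [c [s' [hc [i' [j' [hi [hj Es]]]] ->]]].
  have hib := le2_leq hi.
  have hi' : i' < 2 ^ m by lia.
  have hbi : b - i' < 2 ^ m by lia.
  have hj' : j' < 2 ^ m by have := le2_leq hj; lia.
  have hq : (c == 2) <= qb by move: hc; clear; case: qb; case: c => [|[|[|]]].
  exists ((c == 2) * 2 ^ m + i'), ((c == 1) * 2 ^ m + j'); split; [|split].
  + by apply/(le2_split _ _ _ _ _ hi' hb).
  + rewrite bsub //; apply/(le2_split _ _ _ _ _ hj' hbi); split => //.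
    by move: hc; clear; case: qb; case: c => [|[|[|]]].
  + rewrite Es; move: hc; clear; case: qb; case: c => [|[|[|]]] //=; lia.
Qed.

Lemma P_sub m b s : b < 2 ^ m -> P b s -> 2 ^ m <= s -> P b (s - 2 ^ m).
Proof.
elim: m b s => [|m IH] b s.
- rewrite expn0 => hb /P_bound; case: b hb => //; lia.
- move=> /decomp [qb [b' [hb ->]]] /(P_split _ _ _ _ hb) [c [s' [hc hP ->]]] hs.
  have := P_bound hP; rewrite expnS in hs * => hs'.
  case: c hc hs => [|[|[|c]]] hc hs.
  + lia.
  + have hs2 : 2 ^ m <= s' by lia.
    have := IH _ _ hb hP hs2 => h.
    have -> : 1 * 2 ^ m + s' - 2 * 2 ^ m = 0 * 2 ^ m + (s' - 2 ^ m) by lia.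
    apply/(P_split _ _ _ _ hb); by exists 0, (s' - 2 ^ m); split.
  + have -> : 2 * 2 ^ m + s' - 2 * 2 ^ m = 0 * 2 ^ m + s' by lia.
    apply/(P_split _ _ _ _ hb); by exists 0, s'; split.
  + by case: qb hc.
Qed.

Definition W (r t Q x : nat) := (t.+1 * Q <= x + r) /\ (x < t.+1 * Q).

Lemma inS_P r t l a b : inS r t l a b <-> exists s, P b s /\ W r t (2 ^ l) (a + s).
Proof.
rewrite /W mulSn; split.
- move=> [i [j [hi [hj [r' [h1 h2 h3]]]]]].
  exists (2 * i + j); split; first by exists i, j.
  lia.
- move=> [s [[i [j [hi [hj ->]]]] [h1 h2]]].
  exists i, j; split => //; split => //.
  exists (2 ^ l + t * 2 ^ l - (a + (2 * i + j))); split; lia.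
Qed.

Lemma inS_mono1 r n u a b : r < 2 ^ n -> a < 2 ^ n -> b < 2 ^ n ->
  inS r u.+1 n a b -> inS r u n a b.
Proof.
move=> hr ha hb /inS_P [s [hP [h1 h2]]]; apply/inS_P.
case: (leqP (2 ^ n) s) => hs.
- exists (s - 2 ^ n); split; first exact: P_sub hb hP hs.
  move: h1 h2; rewrite /W !mulSn; lia.
- exists 0; split; first exact: P0.
  move: h1 h2; rewrite /W !mulSn; case: u => [|u] /=; rewrite ?mul0n ?mulSn; lia.
Qed.

Lemma inS_mono r n u v a b : r < 2 ^ n -> a < 2 ^ n -> b < 2 ^ n -> u <= v ->
  inS r v n a b -> inS r u n a b.
Proof.
move=> hr ha hb; elim: v => [|v IH].
- by rewrite leqn0 => /eqP ->.
- rewrite leq_eqVlt => /orP [/eqP -> //|]; rewrite ltnS => huv h.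
  have h2 := inS_mono1 _ _ _ _ _ hr ha hb h. have h3 := IH huv. exact: h3 h2.
Qed.

Lemma inS_empty r n u a b : r < 2 ^ n -> a < 2 ^ n -> b < 2 ^ n -> 3 <= u ->
  ~ inS r u n a b.
Proof.
move=> hr ha hb hu /inS_P [s [hP [h1 h2]]].
have := P_bound hP.
have : 4 * 2 ^ n <= u.+1 * 2 ^ n by apply: leq_mul => //; lia.
lia.
Qed.

Lemma arith1 r t k Q A : 0 < Q -> r < Q -> A < 3 * Q ->
  W r t (2 * Q) (k * Q + A) -> k <= 2 * t + 1 /\ W r (2 * t + 1 - k) Q A.
Proof.
rewrite /W => hQ hr hA [h1 h2].
have hk : k <= 2 * t + 1.
  rewrite leqNgt; apply/negP => hk.
  have : t.+1 * (2 * Q) <= k * Q by rewrite mulnA; apply: leq_mul => //; lia.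
  lia.
split => //.
have [d Ed] : exists d, 2 * t + 1 = k + d by exists (2 * t + 1 - k); lia.
rewrite Ed addKn.
have E : t.+1 * (2 * Q) = k * Q + d * Q + Q.
  by rewrite mulnA (_ : t.+1 * 2 = k + d + 1) ?mulnDl ?mul1n //; lia.
rewrite mulSn; lia.
Qed.

Lemma arith2 r t k Q A : 0 < Q -> k <= 2 * t + 1 ->
  W r (2 * t + 1 - k) Q A -> W r t (2 * Q) (k * Q + A).
Proof.
rewrite /W => hQ hk [h1 h2].
have [d Ed] : exists d, 2 * t + 1 = k + d by exists (2 * t + 1 - k); lia.
move: h1 h2; rewrite Ed addKn => h1 h2.
have E : t.+1 * (2 * Q) = k * Q + d * Q + Q.
  by rewrite mulnA (_ : t.+1 * 2 = k + d + 1) ?mulnDl ?mul1n //; lia.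
move: h1 h2; rewrite E mulSn; lia.
Qed.

Lemma quad r n t (qa qb : bool) a b : r < 2 ^ n -> a < 2 ^ n -> b < 2 ^ n ->
  inS r t n.+1 (qa * 2 ^ n + a) (qb * 2 ^ n + b) <->
  inS r ((2 * t + 1 - qa) - 2 * qb) n a b.
Proof.
move=> hr ha hb; have hQ : 0 < 2 ^ n by rewrite expn_gt0.
split.
- move=> /inS_P [s [/(P_split _ _ _ _ hb) [c [s' [hc hP ->]]] hw]].
  have hs' := P_bound hP.
  have hw' : W r t (2 * 2 ^ n) ((qa + c) * 2 ^ n + (a + s')).
    by move: hw; rewrite expnS mulnDl; congr W; lia.
  have hA : a + s' < 3 * 2 ^ n by lia.
  have [hk hw2] := arith1 _ _ _ _ _ hQ hr hA hw'.
  apply: (inS_mono r n _ (2 * t + 1 - (qa + c)) _ _ hr ha hb); first lia.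
  by apply/inS_P; exists s'.
- move=> /inS_P [s' [hP hw]].
  have hs' := P_bound hP.
  pose c := minn (2 * qb) (2 * t + 1 - qa).
  have hk : qa + c <= 2 * t + 1 by rewrite /c; clear; case: qa; lia.
  have hw' : W r (2 * t + 1 - (qa + c)) (2 ^ n) (a + s').
    by move: hw; congr W; rewrite /c; clear; case: qa; lia.
  apply/inS_P; exists (c * 2 ^ n + s'); split.
  + apply/(P_split _ _ _ _ hb); exists c, s'; split => //; rewrite /c; lia.
  + have := arith2 _ _ _ _ _ hQ hk hw'; rewrite expnS mulnDl; congr W; lia.
Qed.

Definition F r t l a b : nat := `[< inS r t l a b >].
Definition T r t l := \sum_(0 <= a < 2 ^ l) \sum_(0 <= b < 2 ^ l) F r t l a b.

Lemma cardS r t l : #|S r t l| = T r t l.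
Proof.
rewrite /T big_mkord (eq_bigr (fun a : 'I_(2 ^ l) => \sum_(b < 2 ^ l) F r t l a b)); last first.
  by move=> a _; rewrite big_mkord.
rewrite pair_big /= -sum1_card big_mkcond /=; apply: eq_bigr => p _.
by rewrite /S inE /F.
Qed.

Lemma sum_split (G : nat -> nat) N :
  \sum_(0 <= x < 2 * N) G x =
  \sum_(0 <= x < N) G (false * N + x) + \sum_(0 <= x < N) G (true * N + x).
Proof.
rewrite (big_cat_nat _ (n := N)) //=; last lia.
rewrite -{2}(add0n N) big_addn (_ : 2 * N - N = N); last lia.
by congr (_ + _); apply: eq_bigr => i _; rewrite ?mul0n ?mul1n ?add0n // addnC.
Qed.

Lemma T_step r t n : r < 2 ^ n ->
  T r t n.+1 = T r (2 * t + 1 - false - 2 * false) n + T r (2 * t + 1 - false - 2 * true) n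
    + T r (2 * t + 1 - true - 2 * false) n + T r (2 * t + 1 - true - 2 * true) n.
Proof.
move=> hr.
have key : forall (qa qb : bool) u, u = 2 * t + 1 - qa - 2 * qb ->
    \sum_(0 <= a < 2 ^ n) \sum_(0 <= b < 2 ^ n) F r t n.+1 (qa * 2 ^ n + a) (qb * 2 ^ n + b)
    = T r u n.
  move=> qa qb u ->; rewrite /T; apply: eq_big_nat => a /andP [_ ha].
  apply: eq_big_nat => b /andP [_ hb]; rewrite /F.
  have E := quad r n t qa qb a b hr ha hb.
  by case: asboolP => h1; case: asboolP => h2 //; exfalso; [apply: h2; apply/E|apply: h1; apply/E].
rewrite {1}/T expnS sum_split.
under eq_bigr => a _ do rewrite sum_split.
under [in X in _ + X]eq_bigr => a _ do rewrite sum_split.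
rewrite !big_split /=.
rewrite (key false false _ erefl) (key false true _ erefl) (key true false _ erefl) (key true true _ erefl).
by rewrite addnA.
Qed.

Lemma T_empty r u n : r < 2 ^ n -> 3 <= u -> T r u n = 0.
Proof.
move=> hr hu; rewrite /T; apply: big1_seq => a /andP [_]; rewrite mem_iota => /andP [_ ha].
apply: big1_seq => b /andP [_]; rewrite mem_iota => /andP [_ hb].
rewrite /F; case: asboolP => // h; exfalso; apply: (inS_empty _ _ _ _ _ hr _ _ hu h); lia.
Qed.

Theorem mainTheorem7 (r l : nat) :
  (1 <= r)%N -> (2 <= l)%N -> (r < 2 ^ (l - 1))%N ->
  [/\ #|S r 0 l| = 3 * #|S r 0 (l - 1)| + #|S r 1 (l - 1)|,
      #|S r 1 l| = #|S r 0 (l - 1)| + #|S r 1 (l - 1)| + #|S r 2 (l - 1)|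
    & #|S r 2 l| = #|S r 2 (l - 1)| ].
Proof.
case: l => [|n] // _ _; rewrite subSS subn0 => hr.
rewrite !cardS !T_step //.
change [/\ T r 1 n + T r 0 n + T r 0 n + T r 0 n = 3 * T r 0 n + T r 1 n,
  T r 3 n + T r 1 n + T r 2 n + T r 0 n = T r 0 n + T r 1 n + T r 2 n
  & T r 5 n + T r 3 n + T r 4 n + T r 2 n = T r 2 n].
rewrite !(T_empty r 3 n hr) // (T_empty r 4 n hr) // (T_empty r 5 n hr) //.
split; lia.
Qed.
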